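(* Let $Y_k=(y_{1k},\dots,y_{sk})'\in\mathbb{R}^s_{\ge 0}$, $k\in E$, for a finite nonempty set $E$, and let $\mathrm{DMU}_j$ have outputs $y_{1j},\dots,y_{sj}>0$. Fix $r$, let $Q>0$, $\omega\in[0,1]$, and let $$p_{rj}(s)=\begin{cases} Q\omega, & s\le 0,\\ Q\omega\left(1-\frac{s}{y_{rj}}\right), & 0\le s\le y_{rj},\\ 0, & s\ge y_{rj}.\end{cases}$$ Set $M_1=y_{rj}$ and $M_2=\max_{k\in E}\{y_{rk}\}$. Then for every $\lambda_{kj}\ge 0$ ($k\in E$) and $s_{rj}\in\mathbb{R}$ with $\sum_{k\in E}\lambda_{kj}y_{rk}=y_{rj}+s_{rj}$ and $\sum_{k\in E}\lambda_{kj}=1$, there exist binary $I^1_{rj},I^2_{rj},I^3_{rj}\in\{0,1\}$ with $I^1_{rj}+I^2_{rj}+I^3_{rj}=1$ satisfying $$y_{rj}I^3_{rj}-M_1I^1_{rj}\le s_{rj}\le y_{rj}I^2_{rj}+M_2I^3_{rj},$$ and for every such choice of binaries, $p_{rj}(s_{rj})=Q\omega I^1_{rj}+Q\omega\left(1-\frac{s_{rj}}{y_{rj}}\right)I^2_{rj}$. That is, these values of $M_1$ and $M_2$ suffice in the linear representation of the payment function.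
   Context: $E$ is the set of extreme efficient DMUs of the attainable set generated by the DMUs' output vectors; $s_{rj}$ is the deviation of a target (a convex combination of the $Y_k$, $k\in E$) from the actual value $y_{rj}$; $Q$ is the incentive amount available to $\mathrm{DMU}_j$ and $\omega$ the weight of indicator $r$. *)

(* Defs.v *)
From HB Require Import structures.
From mathcomp Require Import all_boot all_order all_algebra.
Set Implicit Arguments. Unset Strict Implicit. Unset Printing Implicit Defensive.
Import Order.TTheory GRing.Theory Num.Theory.
Local Open Scope ring_scope.

Definition payment (R : realFieldType) (Q w y s : R) : R :=
  if s <= 0 then Q * w
  else if s <= y then Q * w * (1 - s / y)
  else 0.

Definition b2r {R : realFieldType} (b : bool) : R := (b : nat)%:R.

(* Main.v *)
Require Import Defs.
From HB Require Import structures.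
From mathcomp Require Import all_boot all_order all_algebra.
From mathcomp Require Import lra.
Import Order.TTheory GRing.Theory Num.Theory.
Local Open Scope ring_scope.

Theorem corollary1 (R : realFieldType) (s : nat) (E : finType)
  (Y : E -> 'I_s -> R) (yj : 'I_s -> R) (r : 'I_s) (Q w : R)
  (hE : (0 < #|E|)%N)
  (hY : forall k i, 0 <= Y k i)
  (hyj : forall i, 0 < yj i)
  (hQ : 0 < Q) (hw0 : 0 <= w) (hw1 : w <= 1) :
  let M1 := yj r in
  let M2 := \big[Num.max/0]_(k : E) Y k r in
  forall (lam : E -> R) (srj : R),
    (forall k, 0 <= lam k) ->
    \sum_(k : E) lam k * Y k r = yj r + srj ->
    \sum_(k : E) lam k = 1 ->
    (exists I1 I2 I3 : bool,
        (nat_of_bool I1 + nat_of_bool I2 + nat_of_bool I3 = 1)%N /\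
        yj r * b2r I3 - M1 * b2r I1 <= srj /\
        srj <= yj r * b2r I2 + M2 * b2r I3) /\
    (forall I1 I2 I3 : bool,
        (nat_of_bool I1 + nat_of_bool I2 + nat_of_bool I3 = 1)%N ->
        yj r * b2r I3 - M1 * b2r I1 <= srj ->
        srj <= yj r * b2r I2 + M2 * b2r I3 ->
        payment Q w (yj r) srj
          = Q * w * b2r I1 + Q * w * (1 - srj / yj r) * b2r I2).
Proof.
move=> M1 M2 lam srj hl hs h1.
have hM2 : forall k, Y k r <= M2.
  move=> k; rewrite /M2 (bigD1 k) //=; by rewrite le_max lexx.
have hM20 : 0 <= M2.
  rewrite /M2; elim/big_rec: _ => //= i x _ hx; by rewrite le_max hx orbT.
have hup : yj r + srj <= M2.
  rewrite -hs; apply: le_trans (_ : \sum_k lam k * M2 <= _).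
    by apply: ler_sum => k _; apply: ler_wpM2l.
  by rewrite -mulr_suml h1 mul1r.
have hlo : 0 <= yj r + srj.
  by rewrite -hs; apply: sumr_ge0 => k _; apply: mulr_ge0.
have hy := hyj r.
rewrite /M1 /b2r.
split.
  case: (lerP srj 0) => h0.
    exists true, false, false; rewrite /=; split=> //; lra.
  case: (lerP srj (yj r)) => h2.
    exists false, true, false; rewrite /=; split=> //; lra.
  exists false, false, true; rewrite /=; split=> //; lra.
move=> [] [] [] //= _ ha hb; rewrite /payment.
- have -> : srj <= 0 by lra. lra.
- case: ifP => h0.
    have e : srj = 0 by lra.
    rewrite e mul0r subr0; lra.
  have -> : srj <= yj r by lra. lra.
- case: ifP => h0; first lra.
  case: ifP => h2; last lra.
  have e : srj = yj r by lra.
  rewrite e divff ?subrr; [lra | by rewrite gt_eqF].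
Qed.
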